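(* Let $n\ge 4$ and $1\le k<\frac{n}{2}$ be integers. If $n\neq 2k+1$, then $\mathrm{Aut}(B(n,k))=\{f_\sigma:\sigma\in \mathrm{Sym}([n])\}\cong \mathrm{Sym}([n])$. If $n=2k+1$, then $\mathrm{Aut}(B(n,k))=\{f_\sigma\alpha^i:\sigma\in\mathrm{Sym}([n]),\ i\in\{0,1\}\}\cong \mathrm{Sym}([n])\times\mathbb{Z}_2$, where $\mathbb{Z}_2$ is the cyclic group of order $2$.
   Context: For integers $n\ge 4$ and $1\le k<\frac n2$, let $[n]=\{1,\dots,n\}$. The graph $B(n,k)$ has vertex set $V=\{v\subset[n] : |v|\in\{k,k+1\}\}$, and two vertices $v,w$ are adjacent iff $v\subset w$ or $w\subset v$. For $\sigma\in\mathrm{Sym}([n])$, $f_\sigma:V\to V$ is $f_\sigma(v)=\{\sigma(x):x\in v\}$. When $n=2k+1$, $\alpha:V\to V$ is the complementation map $\alpha(v)=[n]\setminus v$. *)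

(* Defs.v *)
From HB Require Import structures.
From mathcomp Require Import all_boot all_order all_fingroup.
Set Implicit Arguments. Unset Strict Implicit. Unset Printing Implicit Defensive.

(* [n] is modelled by 'I_n; subsets of [n] are {set 'I_n}. *)
Definition Bpred (n k : nat) (A : {set 'I_n}) : bool := (#|A| == k) || (#|A| == k.+1).

Definition Bvert (n k : nat) := {A : {set 'I_n} | Bpred k A}.

Definition badj n k (v w : Bvert n k) : bool :=
  (val v \proper val w) || (val w \proper val v).

Definition Baut (n k : nat) : {set {perm Bvert n k}} :=
  [set p : {perm Bvert n k} | [forall v, forall w, badj (p v) (p w) == badj v w]].

Lemma fsig_proof n k (s : {perm 'I_n}) (v : Bvert n k) : Bpred k (s @: val v).
Proof. by rewrite /Bpred card_imset; [exact: valP v | exact: perm_inj]. Qed.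

Definition fsig_fun n k (s : {perm 'I_n}) (v : Bvert n k) : Bvert n k :=
  exist _ (s @: val v) (fsig_proof s v).

Lemma fsig_inj n k (s : {perm 'I_n}) : injective (@fsig_fun n k s).
Proof.
move=> u v /(congr1 val) /= H; apply: val_inj.
exact: (imset_inj (@perm_inj _ s)).
Qed.

Definition Fsig n k (s : {perm 'I_n}) : {perm Bvert n k} := perm (@fsig_inj n k s).

Lemma FsigE n k (s : {perm 'I_n}) (v : Bvert n k) : val (Fsig k s v) = s @: val v.
Proof. by rewrite /Fsig permE. Qed.

(* It is only used when n = 2k+1, where
   complements of vertices are vertices; to have a total permutation for all
   n, k we leave v fixed when its complement is not a vertex. *)
Definition alpha_fun n k (v : Bvert n k) : Bvert n k := insubd v (~: val v).

Lemma alpha_inv n k : involutive (@alpha_fun n k).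
Proof.
move=> v; rewrite /alpha_fun.
have [Pc|nPc] := boolP (Bpred k (~: val v)).
  apply: val_inj; rewrite (insubdK _ Pc) setCK insubdK //; exact: valP v.
by rewrite /insubd insubN /= ?insubN.
Qed.

Definition Balpha n k : {perm Bvert n k} := perm (can_inj (@alpha_inv n k)).

Lemma BalphaE n k (v : Bvert n k) :
  n = k.*2.+1 -> val (Balpha n k v) = ~: val v.
Proof.
move=> hn; rewrite /Balpha permE /alpha_fun insubdK //.
have hc : #|~: val v| = k.*2.+1 - #|val v|.
  have h1 : #|~: val v| = n - #|val v|.
    apply/eqP; rewrite -(eqn_add2l #|val v|) cardsC card_ord subnKC //.
    by have := max_card (mem (val v)); rewrite card_ord.
  exact: etrans h1 (congr1 (fun m => m - #|val v|) hn).
change (Bpred k (~: val v)); rewrite /Bpred hc; case/orP: (valP v) => /eqP ->.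
  by rewrite -addnn -addnS addKn eqxx orbT.
by rewrite -addnn -addSn addKn eqxx.
Qed.

(* Main.v *)
Require Import Defs.
From HB Require Import structures.
From mathcomp Require Import all_boot all_order all_fingroup all_algebra.
From mathcomp Require Import zify.
Set Implicit Arguments. Unset Strict Implicit. Unset Printing Implicit Defensive.

Section Key.
Variable T : finType.

Lemma add1 (E A : {set T}) : #|A| = #|E|.+1 -> E \subset A ->
  exists c, c \notin E /\ A = c |: E.
Proof.
move=> hA hEA.
have : #|A :\: E| == 1.
  by rewrite cardsD (setIidPr hEA) hA subSnn.
case/cards1P=> c hc; exists c.
have cAE : c \in A :\: E by rewrite hc set11.
split; first by move: cAE; rewrite inE => /andP [].
apply/setP=> x; rewrite !inE.
case hx: (x \in E); first by rewrite orbT (subsetP hEA).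
rewrite orbF; have := congr1 (fun S : {set T} => x \in S) hc; rewrite /= !inE hx /=.
by move=> ->.
Qed.

Lemma supc (E : {set T}) :
  #|[set A : {set T} | (#|A| == #|E|.+1) && (E \subset A)]| = #|T| - #|E|.
Proof.
have -> : [set A : {set T} | (#|A| == #|E|.+1) && (E \subset A)]
     = [set x |: E | x in ~: E].
  apply/setP=> A; rewrite inE; apply/andP/imsetP.
    by case=> /eqP hA hEA; case: (add1 hA hEA)=> c [hc ->]; exists c; rewrite ?inE.
  case=> c; rewrite inE => hc ->; split; last exact: subsetUr.
  by rewrite cardsU1 hc.
rewrite card_in_imset; last first.
  move=> x y; rewrite !inE => hx hy hxy.
  have : x \in y |: E by rewrite -hxy setU11.
  by rewrite !inE (negbTE hx) orbF => /eqP.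
by rewrite -(cardsC E) addKn.
Qed.

Definition Qprop m (g : {set T} -> {set T}) :=
 [/\ forall A : {set T}, #|A| = m \/ #|A| = m.+1 -> #|g A| = #|A|,
     forall A B : {set T}, #|A| = #|B| -> (#|A| = m \/ #|A| = m.+1) -> g A = g B -> A = B
   & forall A B : {set T}, #|A| = m -> #|B| = m.+1 -> (g A \subset g B) = (A \subset B)].

Lemma Qsurj m g L : Qprop m g -> (L = m \/ L = m.+1) ->
  forall B : {set T}, #|B| = L -> exists A : {set T}, #|A| = L /\ g A = B.
Proof.
case=> hc hi _ hL B hB.
pose D := [set A : {set T} | #|A| == L].
have sub : g @: D \subset D.
  apply/subsetP=> y /imsetP [A]; rewrite !inE => /eqP hA ->.
  by rewrite hc ?hA.
have : g @: D == D.
  rewrite eqEcard sub /= card_in_imset //.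
  move=> A1 A2; rewrite !inE => /eqP h1 /eqP h2; apply: hi; first by rewrite h1 h2.
  by rewrite h1.
move/eqP=> hD.
have : B \in g @: D by rewrite hD inE hB.
by case/imsetP=> A; rewrite inE => /eqP hA ->; exists A.
Qed.

Lemma key m g : m < #|T| -> Qprop m g ->
  exists s : {perm T}, forall A : {set T}, #|A| = m \/ #|A| = m.+1 -> g A = s @: A.
Proof.
elim: m g => [|m IH] g hm Q.
  case: (Q) => hc hi _.
  pose f x := odflt x [pick y in g [set x]].
  have hf x : g [set x] = [set f x].
    have : #|g [set x]| == 1 by rewrite hc cards1 //; right.
    case/cards1P=> y hy; rewrite /f hy.
    case: pickP=> [z|]; first by move=> hz; move: hz; rewrite ?inE => /eqP ->.
    by move/(_ y); rewrite inE eqxx.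
  have finj : injective f.
    move=> x y hxy; apply/set1_inj/hi; rewrite ?cards1 //; first by right.
    by rewrite !hf hxy.
  exists (perm finj)=> A [] hA.
    move/eqP: hA; rewrite cards_eq0 => /eqP ->; rewrite imset0.
    by apply/eqP; rewrite -cards_eq0 hc ?cards0 //; left.
  move/eqP: hA; case/cards1P=> x ->; by rewrite imset_set1 permE hf.
case: (Q) => hc hi hs.
set K := m.+1.
have Sm : (m.+1 == m) = false by rewrite eqn_leq ltnn.
have F1 (A1 A2 : {set T}) : #|A1| = K -> #|A2| = K -> #|A1 :|: A2| = K.+1 ->
    g (A1 :|: A2) = g A1 :|: g A2 /\ #|g A1 :&: g A2| = m.
  move=> h1 h2 h12.
  have s1 : g A1 \subset g (A1 :|: A2) by rewrite hs // subsetUl.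
  have s2 : g A2 \subset g (A1 :|: A2) by rewrite hs // subsetUr.
  have gne : g A1 != g A2.
    apply/eqP=> /hi; rewrite h1 h2 => /(_ erefl (or_introl erefl)) e.
    by move: h12; rewrite e setUid h2 => /n_Sn.
  have e1 : #|g A1| = K by rewrite hc h1 //; left.
  have e2 : #|g A2| = K by rewrite hc h2 //; left.
  have hU : K < #|g A1 :|: g A2|.
    rewrite -{1}e1; apply: proper_card.
    rewrite properEneq subsetUl andbT; apply/eqP=> e.
    have s21 : g A2 \subset g A1 by rewrite e subsetUr.
    by move: gne; rewrite eq_sym eqEcard s21 e1 e2 leqnn.
  have eU : g A1 :|: g A2 = g (A1 :|: A2).
    apply/eqP; rewrite eqEcard subUset s1 s2 /= hc ?h12 //; by right.
  split=> //; have := cardsUI (g A1) (g A2); rewrite eU hc ?h12; last by right.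
  rewrite e1 e2 /K; lia.
have two (C : {set T}) : #|C| = m -> exists a b, [/\ a \notin C, b \notin C & a != b].
  move=> hC; have : 1 < #|~: C| by rewrite cardsCs setCK hC /K in hm *; lia.
  by case/card_gt1P=> a [b [ha hb hab]]; exists a, b; rewrite -!in_setC.
have cU1 (C : {set T}) a : #|C| = m -> a \notin C -> #|a |: C| = K by move=> hC ha; rewrite cardsU1 ha hC.
have F2 (C : {set T}) a b c : #|C| = m -> a \notin C -> b \notin C -> c \notin C -> a != b ->
   g (a |: C) :&: g (b |: C) \subset g (c |: C).
  move=> hC ha hb hc' hab.
  have [->|hca] := eqVneq c a; first exact: subsetIl.
  have [->|hcb] := eqVneq c b; first exact: subsetIr.
  have U2 x y : x \notin C -> y \notin C -> x != y -> #|(x |: C) :|: (y |: C)| = K.+1.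
    move=> hx hy hxy; have -> : (x |: C) :|: (y |: C) = x |: (y |: C).
      by apply/setP=> z; rewrite !inE; case: (z == x); case: (z == y); case: (z \in C).
    by rewrite cardsU1 cU1 // !inE negb_or hxy hx.
  have [eW hXY] := F1 _ _ (cU1 _ _ hC ha) (cU1 _ _ hC hb) (U2 _ _ ha hb hab).
  have [_ hXZ] := F1 _ _ (cU1 _ _ hC hc') (cU1 _ _ hC ha) (U2 _ _ hc' ha hca).
  have [_ hYZ] := F1 _ _ (cU1 _ _ hC hc') (cU1 _ _ hC hb) (U2 _ _ hc' hb hcb).
  set X := g (a |: C) in eW hXY hXZ *; set Y := g (b |: C) in eW hXY hYZ *;
  set Z := g (c |: C) in hXZ hYZ *.
  case: (boolP (X :&: Y \subset Z)) => // hn; exfalso.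
  have h3 : #|X :&: Y :&: Z| < m.
    rewrite -hXY; apply: proper_card; rewrite properEneq subsetIl andbT.
    by apply/eqP=> e; move/negP: hn; apply; rewrite -e subsetIr.
  have eI : (Z :&: X) :&: (Z :&: Y) = X :&: Y :&: Z.
    by apply/setP=> z; rewrite !inE; case: (z \in X); case: (z \in Y); case: (z \in Z).
  have hZU : #|(Z :&: X) :|: (Z :&: Y)| = #|Z|.
    apply/eqP; rewrite eqn_leq; apply/andP; split.
      by apply: subset_leq_card; rewrite subUset !subsetIl.
    have := cardsUI (Z :&: X) (Z :&: Y); rewrite eI hXZ hYZ hc ?cU1 //; last by left.
    by lia.
  have sZ : Z \subset X :|: Y.
    have : (Z :&: X) :|: (Z :&: Y) == Z by rewrite eqEcard hZU leqnn subUset !subsetIl.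
    move/eqP=> <-; apply/subsetP=> z; rewrite !inE => /orP [] /andP [_ ->] //.
    by rewrite orbT.
  move: sZ; rewrite -eW hs ?(cU1 _ _ hC hc') ?(U2 _ _ ha hb hab) // => /subsetP /(_ c (setU11 _ _)).
  by rewrite !inE (negbTE hca) (negbTE hcb) (negbTE hc').
pose chi (C : {set T}) := \bigcap_(A : {set T} | (#|A| == K) && (C \subset A)) g A.
have chiE (C : {set T}) a b : #|C| = m -> a \notin C -> b \notin C -> a != b ->
    chi C = g (a |: C) :&: g (b |: C).
  move=> hC ha hb hab; apply/eqP; rewrite eqEsubset; apply/andP; split.
    by rewrite subsetI !bigcap_inf // cU1 ?eqxx ?subsetUr.
  apply/bigcapsP=> A /andP [/eqP hA hCA].
  have hA' : #|A| = #|C|.+1 by rewrite hA hC.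
  have [c [hc' ->]] := add1 hA' hCA.
  exact: F2.
have chiS (C A : {set T}) : #|A| = K -> C \subset A -> chi C \subset g A.
  by move=> hA hCA; rewrite bigcap_inf // hA eqxx.
have chic (C : {set T}) : #|C| = m -> #|chi C| = m.
  move=> hC; have [a [b [ha hb hab]]] := two C hC.
  rewrite (chiE C a b) //.
  have U2 : #|(a |: C) :|: (b |: C)| = K.+1.
    have -> : (a |: C) :|: (b |: C) = a |: (b |: C).
      by apply/setP=> z; rewrite !inE; case: (z == a); case: (z == b); case: (z \in C).
    by rewrite cardsU1 cU1 // !inE negb_or hab ha.
  by case: (F1 _ _ (cU1 _ _ hC ha) (cU1 _ _ hC hb) U2).
have chiS' (C A : {set T}) : #|C| = m -> #|A| = K -> chi C \subset g A -> C \subset A.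
  move=> hC hA hsub.
  pose S1 := [set B : {set T} | (#|B| == K) && (C \subset B)].
  pose S2 := [set B : {set T} | (#|B| == K) && (chi C \subset g B)].
  have s12 : S1 \subset S2.
    by apply/subsetP=> B; rewrite !inE => /andP [/eqP hB hCB]; rewrite hB eqxx chiS.
  have c1 : #|S1| = #|T| - m by rewrite -{1}hC -supc /S1 hC.
  have c2 : #|S2| = #|T| - m.
    rewrite -(chic C hC) -supc chic //.
    have -> : [set B : {set T} | (#|B| == m.+1) && (chi C \subset B)] = g @: S2.
      apply/setP=> B; rewrite inE; apply/andP/imsetP.
        case=> /eqP hB hB2; have [A' [hA' e]] := Qsurj Q (or_introl erefl) hB.
        by exists A'; rewrite // inE hA' eqxx e.
      case=> A'; rewrite inE => /andP [/eqP hA' h] ->; split=> //.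
      by rewrite hc hA' //; left.
    rewrite card_in_imset //.
    move=> A1 A2; rewrite !inE => /andP [/eqP h1 _] /andP [/eqP h2 _].
    by apply: hi; rewrite ?h1 ?h2 //; left.
  have : S1 == S2 by rewrite eqEcard s12 c1 c2 leqnn.
  move/eqP=> e; have : A \in S2 by rewrite inE hA eqxx hsub.
  by rewrite -e inE => /andP [].
pose g' (A : {set T}) := if #|A| == m then chi A else g A.
have Q' : Qprop m g'.
  rewrite /g'; split.
  - move=> A [] hA; first by rewrite hA eqxx chic.
    by rewrite hA Sm hc //; left.
  - move=> A B hAB [] hA; rewrite -hAB hA ?eqxx; last first.
      rewrite Sm; apply: hi; rewrite -?hAB //; by left.
    move=> e; have hB : #|B| = m by rewrite -hAB.
    have [a [b [ha hb hab]]] := two A hA.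
    have sa : B \subset a |: A by apply: chiS' hB (cU1 _ _ hA ha) _; rewrite -e chiS ?cU1 ?subsetUr.
    have sb : B \subset b |: A by apply: chiS' hB (cU1 _ _ hA hb) _; rewrite -e chiS ?cU1 ?subsetUr.
    apply/esym/eqP; rewrite eqEcard hA hB leqnn andbT; apply/subsetP=> x hx.
    move: (subsetP sa x hx) (subsetP sb x hx); rewrite !inE.
    case: (x \in A); rewrite ?orbT // !orbF => /eqP -> /eqP e2.
    by move: hab; rewrite e2 eqxx.
  - move=> A B hA hB; rewrite hA hB eqxx Sm.
    apply/idP/idP; first exact: chiS'.
    exact: chiS.
have [s hsg] := IH g' (ltnW hm) Q'.
have gK (A : {set T}) : #|A| = K -> g A = s @: A.
  by move=> hA; rewrite -hsg ?hA /g' ?hA ?Sm //; right.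
exists s=> A [] hA; first exact: gK.
apply/esym/eqP; rewrite eqEcard card_imset ?hc ?hA ?leqnn ?andbT; try exact: perm_inj; last by right.
apply/subsetP=> y /imsetP [x hx ->].
have : 0 < #|A :\ x| by move: (cardsD1 x A); rewrite hx hA; lia.
case/card_gt0P=> z; rewrite !inE => /andP [hzx hz].
have hAz : #|A :\ z| = K by move: (cardsD1 z A); rewrite hz hA; lia.
have sAz : A :\ z \subset A by apply: subsetDl.
rewrite -(hs _ _ hAz hA) gK // in sAz.
apply: (subsetP sAz); apply: imset_f; by rewrite !inE eq_sym hzx.
Qed.

End Key.

Section Extra.
Local Open Scope group_scope.
Variable T : finType.

Lemma subc (E : {set T}) L : #|E| = L.+1 ->
  #|[set A : {set T} | (#|A| == L) && (A \subset E)]| = L.+1.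
Proof.
move=> hE.
have -> : [set A : {set T} | (#|A| == L) && (A \subset E)] = [set E :\ x | x in E].
  apply/setP=> A; rewrite inE; apply/andP/imsetP.
    case=> /eqP hA hAE; have hE' : #|E| = #|A|.+1 by rewrite hE hA.
    have [c [hc eE]] := add1 hE' hAE.
    exists c; first by rewrite eE setU11.
    by rewrite eE setU1K.
  case=> x hx ->; split; last exact: subD1set.
  by move: (cardsD1 x E); rewrite hx hE => [[]] ->.
rewrite card_in_imset ?hE //.
move=> x y hx hy hxy.
have : x \notin E :\ y by rewrite -hxy !inE eqxx.
by rewrite !inE hx andbT negbK => /eqP.
Qed.

Lemma exsub (S : {set T}) L : L <= #|S| -> exists2 A : {set T}, A \subset S & #|A| = L.
Proof.
elim: L => [|L IH] hL; first by exists set0; rewrite ?sub0set ?cards0.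
have [A hAS hA] := IH (ltnW hL).
have : 0 < #|S :\: A| by rewrite cardsD (setIidPr hAS) hA; lia.
case/card_gt0P=> x; rewrite inE => /andP [hxA hxS].
exists (x |: A); first by rewrite subUset sub1set hxS hAS.
by rewrite cardsU1 hxA hA.
Qed.

Lemma mem_imset_perm (s : {perm T}) (A : {set T}) x : (x \in s @: A) = (s^-1 x \in A).
Proof.
apply/imsetP/idP=> [[y hy ->]|h]; first by rewrite permK.
by exists (s^-1 x); rewrite ?permKV.
Qed.

Lemma imset_perm_sub (s : {perm T}) (A B : {set T}) : (s @: A \subset s @: B) = (A \subset B).
Proof.
apply/idP/idP; last exact: imsetS.
move=> h; apply/subsetP=> x hx.
have : s x \in s @: B by apply: (subsetP h); apply: imset_f.
by rewrite mem_imset_perm permK.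
Qed.

Lemma imset_perm_proper (s : {perm T}) (A B : {set T}) :
  (s @: A \proper s @: B) = (A \proper B).
Proof. by rewrite !properE !imset_perm_sub. Qed.

Lemma imset_permC (s : {perm T}) (A : {set T}) : s @: (~: A) = ~: (s @: A).
Proof. by apply/setP=> x; rewrite inE !mem_imset_perm inE. Qed.

End Extra.

Section Main.
Local Open Scope group_scope.
Variables n k : nat.
Local Notation V := (Bvert n k).

Definition mkV (A : {set 'I_n}) (h : Bpred k A) : V := exist _ A h.

Lemma vcard (v : V) : #|val v| = k \/ #|val v| = k.+1.
Proof. by case/orP: (valP v) => /eqP ->; [left|right]. Qed.

Lemma BpredE (A : {set 'I_n}) : #|A| = k \/ #|A| = k.+1 -> Bpred k A.
Proof. by rewrite /Bpred; case=> ->; rewrite eqxx ?orbT. Qed.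

Lemma exV (A : {set 'I_n}) : #|A| = k \/ #|A| = k.+1 -> exists v : V, A = val v.
Proof. by move=> h; exists (mkV (BpredE h)). Qed.

Lemma BautP (p : {perm V}) :
  reflect (forall v w, badj (p v) (p w) = badj v w) (p \in Baut n k).
Proof.
rewrite inE; apply: (iffP idP) => [H v w|H].
  by move/forallP: H => /(_ v) /forallP /(_ w) /eqP.
by apply/forallP=> v; apply/forallP=> w; rewrite H.
Qed.

Lemma BautM (p q : {perm V}) : p \in Baut n k -> q \in Baut n k -> p * q \in Baut n k.
Proof.
move=> /BautP hp /BautP hq; apply/BautP=> v w; by rewrite !permM hq hp.
Qed.

Lemma Baut1 : 1 \in Baut n k.
Proof. by apply/BautP=> v w; rewrite !perm1. Qed.

Lemma adjE (v w : V) : #|val v| = k -> #|val w| = k.+1 -> badj v w = (val v \subset val w).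
Proof.
move=> hv hw; rewrite /badj.
have -> : (val w \proper val v) = false.
  by apply/negP=> /proper_card; rewrite hv hw; lia.
rewrite orbF properEneq; case: eqVneq=> // e; move: hv; rewrite e hw; lia.
Qed.

Lemma badj_lev (v w : V) : badj v w -> #|val v| != #|val w|.
Proof. by case/orP=> /proper_card; lia. Qed.

Lemma badjC (v w : V) : badj v w = badj w v.
Proof. by rewrite /badj orbC. Qed.

Lemma levpres (p : {perm V}) : p \in Baut n k -> k < n ->
  (forall v, #|val (p v)| = #|val v|) -> exists s, p = Fsig k s.
Proof.
move=> /BautP hBa hkn hp.
pose g (A : {set 'I_n}) := if (insub A : option V) is Some v then val (p v) else A.
have gE v : g (val v) = val (p v) by rewrite /g valK.
have Q : Qprop k g.
  split.
  - by move=> A hA; have [v ->] := exV hA; rewrite gE hp.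
  - move=> A B hAB hA; have [v ->] := exV hA.
    rewrite hAB in hA; have [w ->] := exV hA.
    by rewrite !gE => /val_inj /perm_inj ->.
  - move=> A B hA hB; have [v ev] := exV (or_introl hA); have [w ew] := exV (or_intror hB).
    rewrite ev ew in hA hB *.
    by rewrite !gE -adjE ?hp // -hBa adjE ?hp.
have hm : k < #|'I_n| by rewrite card_ord.
have [s hs] := key hm Q.
exists s; apply/permP=> v; apply: val_inj; rewrite FsigE -gE; apply: hs; exact: vcard.
Qed.

Definition deg (v : V) := #|[set w | badj v w]|.

Lemma degB (p : {perm V}) (v : V) : p \in Baut n k -> deg (p v) = deg v.
Proof.
move=> /BautP hB; rewrite /deg.
have -> : [set w | badj (p v) w] = p @: [set w | badj v w].
  apply/setP=> w; rewrite inE; apply/idP/imsetP.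
    by move=> h; exists (p^-1 w); rewrite ?permKV // inE -hB permKV.
  by case=> u; rewrite inE => h ->; rewrite hB.
by rewrite card_imset //; apply: perm_inj.
Qed.

Lemma deg_k (v : V) : #|val v| = k -> deg v = n - k.
Proof.
move=> hv; rewrite /deg -(card_imset _ val_inj).
have -> : val @: [set w | badj v w] =
   [set A : {set 'I_n} | (#|A| == #|val v|.+1) && (val v \subset A)].
  apply/setP=> A; rewrite inE; apply/imsetP/andP.
    case=> w; rewrite inE => hw ->.
    have hw' : #|val w| = k.+1.
      by case: (vcard w) => // e; move: (badj_lev hw); rewrite hv e eqxx.
    by rewrite hv hw' eqxx -adjE.
  case=> /eqP hA hvA; rewrite hv in hA.
  have [w ew] := exV (or_intror hA); exists w; rewrite // inE adjE // -ew //.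
by rewrite supc card_ord hv.
Qed.

Lemma deg_k1 (v : V) : #|val v| = k.+1 -> deg v = k.+1.
Proof.
move=> hv; rewrite /deg -(card_imset _ val_inj).
have -> : val @: [set w | badj v w] =
   [set A : {set 'I_n} | (#|A| == k) && (A \subset val v)].
  apply/setP=> A; rewrite inE; apply/imsetP/andP.
    case=> w; rewrite inE badjC => hw ->.
    have hw' : #|val w| = k.
      by case: (vcard w) => // e; move: (badj_lev hw); rewrite hv e eqxx.
    by rewrite hw' eqxx -adjE.
  case=> /eqP hA hvA.
  have [w ew] := exV (or_introl hA); exists w; rewrite // inE badjC adjE // -ew //.
by rewrite subc.
Qed.

Lemma FsigB s : Fsig k s \in Baut n k.
Proof. by apply/BautP=> v w; rewrite /badj !FsigE !imset_perm_proper. Qed.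

Lemma FsigM (s t : {perm 'I_n}) : Fsig k (s * t) = Fsig k s * Fsig k t.
Proof.
apply/permP=> v; apply: val_inj; rewrite permM !FsigE -imset_comp.
by apply: eq_imset=> x; rewrite /= permM.
Qed.

Lemma exk : k <= n -> exists v : V, #|val v| = k.
Proof.
move=> hk; have hk' : k <= #|[set: 'I_n]| by rewrite cardsT card_ord.
have [A _ hA] := exsub hk'.
by have [v ev] := exV (or_introl hA); exists v; rewrite -ev.
Qed.

Lemma Fsig_inj : 1 <= k -> k < n -> injective (@Fsig n k).
Proof.
move=> hk1 hkn s t hst; apply/permP=> x; case: (eqVneq (s x) (t x)) => // hne; exfalso.
set y := s^-1 (t x).
have hyx : y != x.
  apply: contra hne => /eqP hy; apply/eqP; by rewrite -[t x](permKV s) -/y hy.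
have hc : k.-1 <= #|~: [set x; y]| by rewrite cardsCs setCK cards2 eq_sym hyx card_ord; lia.
have [A' hA' cA'] := exsub hc.
have hxA' : x \notin A' by apply/negP=> /(subsetP hA'); rewrite !inE eqxx.
have hyA' : y \notin A' by apply/negP=> /(subsetP hA'); rewrite !inE eqxx orbT.
have hA : #|x |: A'| = k by rewrite cardsU1 hxA' cA'; lia.
have [v ev] := exV (or_introl hA).
have := congr1 (fun p : {perm V} => val (p v)) hst; rewrite /= !FsigE -ev => e.
have : t x \in s @: (x |: A') by rewrite e imset_f // setU11.
rewrite mem_imset_perm -/y !inE (negbTE hyx) /=.
by rewrite (negbTE hyA').
Qed.

Lemma conn (P : V -> bool) : 1 <= k -> (forall v w, badj v w -> P v = P w) -> forall v w, P v = P w.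
Proof.
move=> hk1 HP.
have down v : exists2 u : V, #|val u| = k & P u = P v.
  case: (vcard v) => hv; first by exists v.
  have : 0 < #|val v| by rewrite hv.
  case/card_gt0P=> x hx.
  have hA : #|val v :\ x| = k by move: (cardsD1 x (val v)); rewrite hx hv; lia.
  have [u eu] := exV (or_introl hA); exists u; rewrite -?eu //.
  by apply: HP; rewrite adjE -?eu ?subD1set.
have kk d : forall u w : V, #|val u| = k -> #|val w| = k -> #|val u :\: val w| = d -> P u = P w.
  elim: d => [|d IH] u w hu hw hd.
    have : val u \subset val w by rewrite -setD_eq0 -cards_eq0 hd.
    move=> hs; have : val u == val w by rewrite eqEcard hs hu hw leqnn.
    by move/eqP/val_inj ->.
  have : 0 < #|val u :\: val w| by rewrite hd.
  case/card_gt0P=> x; rewrite inE => /andP [hxw hxu].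
  have : 0 < #|val w :\: val u|.
    move: hd; rewrite !cardsD setIC hu hw; lia.
  case/card_gt0P=> y; rewrite inE => /andP [hyu hyw].
  have hU : #|y |: val u| = k.+1 by rewrite cardsU1 hyu hu.
  have [mid em] := exV (or_intror hU).
  have hxU : x \in y |: val u by rewrite !inE hxu orbT.
  have hA : #|(y |: val u) :\ x| = k by move: (cardsD1 x (y |: val u)); rewrite hxU hU; lia.
  have [u' eu'] := exV (or_introl hA).
  have e1 : P u = P mid by apply: HP; rewrite adjE -?em ?subsetUr.
  have e2 : P u' = P mid by apply: HP; rewrite adjE -?em -?eu' ?subD1set.
  rewrite e1 -e2; apply: IH; rewrite -?eu' //.
  have -> : (y |: val u) :\ x :\: val w = (val u :\: val w) :\ x.
    apply/setP=> z; rewrite !inE.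
    case: (eqVneq z y) => [->|hzy]; first by rewrite hyw /= ?andbF.
    by case: (z \in val w); case: (z == x); case: (z \in val u).
  by move: (cardsD1 x (val u :\: val w)); rewrite hd !inE hxw hxu; lia.
move=> v w; have [u1 h1 e1] := down v; have [u2 h2 e2] := down w.
by rewrite -e1 -e2; apply: (kk _ _ _ h1 h2 erefl).
Qed.

Lemma cardC_n (A : {set 'I_n}) : #|~: A| = n - #|A|.
Proof. by have := cardsC A; rewrite card_ord; lia. Qed.

Lemma BalphaB : n = k.*2.+1 -> Balpha n k \in Baut n k.
Proof.
move=> hn; apply/BautP=> v w; rewrite /badj !BalphaE // !properC orbC //.
Qed.

Lemma Balpha2 : n = k.*2.+1 -> Balpha n k * Balpha n k = 1.
Proof.
by move=> hn; apply/permP=> v; apply: val_inj; rewrite permM perm1 !BalphaE // setCK.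
Qed.

Lemma Balpha_exp2 : n = k.*2.+1 -> Balpha n k ^+ 2 = 1.
Proof. by move=> hn; rewrite expgS expg1 Balpha2. Qed.

Lemma Fsig_comm (s : {perm 'I_n}) : n = k.*2.+1 -> commute (Fsig k s) (Balpha n k).
Proof.
move=> hn; apply/permP=> v; apply: val_inj; rewrite !permM !FsigE !BalphaE // FsigE.
by rewrite imset_permC.
Qed.

Lemma cardAexp (b : 'Z_2) (v : V) : n = k.*2.+1 ->
  #|val ((Balpha n k ^+ b) v)| = if nat_of_ord b == 0 then #|val v| else n - #|val v|.
Proof.
move=> hn; case: b => [[|[|//]] hb] /=; rewrite ?expg0 ?expg1 ?perm1 //.
by rewrite BalphaE // cardC_n.
Qed.

End Main.

Theorem theorem3p10 (n k : nat) (hn : 4 <= n) (hk1 : 1 <= k) (hk2 : k.*2 < n) :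
  (n != k.*2.+1 ->
     Baut n k = [set Fsig k s | s : {perm 'I_n}]
     /\ Baut n k \isog [set: {perm 'I_n}]) /\
  (n = k.*2.+1 ->
     Baut n k = [set (Balpha n k ^+ (nat_of_bool b) * Fsig k s)%g | s : {perm 'I_n}, b : bool]
     /\ Baut n k \isog [set: ({perm 'I_n} * 'Z_2)%type]).
Proof.
have hkn : k < n by lia.
split.
  move=> hne.
  have lev p : p \in Baut n k -> forall v, #|val (p v)| = #|val v|.
    move=> hp v; have := degB v hp.
    case: (vcard v) => hv; case: (vcard (p v)) => hpv;
      rewrite ?(deg_k hv) ?(deg_k hpv) ?(deg_k1 hv) ?(deg_k1 hpv) ?hv ?hpv //;
      move/eqP: hne; lia.
  have eqA : Baut n k = [set Fsig k s | s : {perm 'I_n}].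
    apply/setP=> p; apply/idP/imsetP.
      by move=> hp; have [s ->] := levpres hp hkn (lev p hp); exists s.
    by case=> s _ ->; apply: FsigB.
  split=> //.
  pose f := @Morphism _ _ [set: {perm 'I_n}] (@Fsig n k) (in2W (@FsigM n k)).
  have im : (f @* [set: {perm 'I_n}])%g = Baut n k.
    rewrite morphimEdom eqA; apply/setP=> p; apply/imsetP/imsetP.
      by case=> s _ ->; exists s.
    by case=> s _ ->; exists s; rewrite ?inE.
  rewrite -im isog_sym.
  apply: (isom_isog f (subxx _)); apply: sub_isom => //.
  by apply/injmP=> x y _ _; apply: Fsig_inj.
move=> hn2.
have eqB : Baut n k = [set (Balpha n k ^+ (nat_of_bool b) * Fsig k s)%g | s : {perm 'I_n}, b : bool].
  apply/setP=> p; apply/idP/imset2P.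
    move=> hp; pose P (v : Bvert n k) := #|val (p v)| == #|val v|.
    have HP v w : badj v w -> P v = P w.
      move=> hvw; have hpvw : badj (p v) (p w) by move/BautP: hp => ->.
      move: (badj_lev hvw) (badj_lev hpvw); rewrite /P.
      case: (vcard v) => ->; case: (vcard w) => ->; case: (vcard (p v)) => ->;
        case: (vcard (p w)) => ->; rewrite ?eqxx //; lia.
    have [v0 hv0] := exk (ltnW hkn).
    case hP0 : (P v0).
      have hall v : #|val (p v)| = #|val v| by apply/eqP; move: (conn hk1 HP v v0); rewrite hP0.
      have [s ->] := levpres hp hkn hall.
      by exists s false => //; rewrite expg0 mul1g.
    have hall v : #|val ((Balpha n k * p)%g v)| = #|val v|.
      have := conn hk1 HP (Balpha n k v) v0; rewrite hP0 /P permM => /eqP.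
      rewrite BalphaE // cardC_n => hne.
      case: (vcard v) => hv; case: (vcard (p (Balpha n k v))) => hpv; rewrite hv hpv in hne *;
        lia.
    have [s hs] := levpres (BautM (BalphaB hn2) hp) hkn hall.
    exists s true => //; rewrite expg1 -hs mulgA Balpha2 // mul1g //.
  case=> s b _ _ ->; apply: BautM; last exact: FsigB.
  by case: b; rewrite ?expg0 ?expg1 ?Baut1 ?BalphaB.
split=> //.
pose h (x : {perm 'I_n} * 'Z_2) := (Balpha n k ^+ (nat_of_ord x.2) * Fsig k x.1)%g.
have hM x y : h (x * y)%g = (h x * h y)%g.
  case: x => s1 b1; case: y => s2 b2.
  have -> : ((s1, b1) * (s2, b2))%g = ((s1 * s2)%g, (b1 * b2)%g) by [].
  rewrite /h /=.
  have eb : (Balpha n k ^+ (nat_of_ord (b1 * b2)%g) = Balpha n k ^+ (b1 + b2))%g.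
    have -> : nat_of_ord (b1 * b2)%g = (b1 + b2) %% 2 by case: b1; case: b2.
    by rewrite expg_mod // Balpha_exp2.
  rewrite eb expgD FsigM !mulgA; congr (_ * _)%g; rewrite -!mulgA; congr (_ * _)%g.
  by rewrite (commuteX b2 (Fsig_comm s1 hn2)).
pose f := @Morphism _ _ [set: {perm 'I_n} * 'Z_2] h (in2W hM).
have im : (f @* [set: {perm 'I_n} * 'Z_2])%g = Baut n k.
  rewrite morphimEdom eqB; apply/setP=> p; apply/imsetP/imset2P.
    case=> [[s b]] _ ->; exists s (nat_of_ord b == 1) => //.
    by rewrite /= /h /=; case: b => [[|[|//]] hb].
  case=> s b _ _ ->.
  have hb : (nat_of_bool b < (Zp_trunc 2).+2)%N by case: b.
  by exists (s, Ordinal hb) => //.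
rewrite -im isog_sym.
apply: (isom_isog f (subxx _)); apply: sub_isom => //.
have [v0 hv0] := exk (ltnW hkn).
apply/injmP=> [[s1 b1]] [s2 b2] _ _ /= e.
have eb : b1 = b2.
  have := congr1 (fun q : {perm Bvert n k} => #|val (q v0)|) e.
  rewrite /h /= !permM !FsigE !card_imset; try exact: perm_inj.
  rewrite !cardAexp // hv0 => H; apply: ord_inj; move: H.
  have := ltn_ord b1; have := ltn_ord b2; rewrite hn2.
  case: (nat_of_ord b1) => [|[|?]]; case: (nat_of_ord b2) => [|[|?]] //=; lia.
subst b2; move: e; rewrite /h /= => /mulgI /Fsig_inj -> //.
Qed.
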